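(* Let $a\in[0,\infty)$ and let $t:[0,1]\to[0,\infty]$ and $s:[0,\infty]\to[0,1]$ be continuous and increasing functions such that $G_{t,s}(x,y)=s(t(x)+t(y))$ defines a grouping function $G_{t,s}:[0,1]^2\to[0,1]$, and suppose that at least one of the following holds: (1) $t(x)=\frac{a}{2}$ if and only if $x=0$; (2) $s(x)=0$ if and only if $x\in[0,a]$. Then there exist a pseudo automorphism $\mathcal{F}$ and a t-superconorm $T_{super}$ such that $G_{t,s}(x,y)=\mathcal{F}(T_{super}(x,y))$ for all $x,y\in[0,1]$.
   Context: ''Increasing'' means non-decreasing. Arithmetic in $[0,\infty]$ uses $c+\infty=\infty$; continuity on $[0,\infty]$ refers to the usual topology of the extended half-line. A grouping function is a map $G:[0,1]^2\to[0,1]$ that is (G1) commutative, (G2) $G(x,y)=0$ iff $x=y=0$, (G3) $G(x,y)=1$ iff $x=1$ or $y=1$, (G4) increasing in each variable, (G5) continuous. A pseudo automorphism is a continuous increasing map $\mathcal{F}:[0,1]\to[0,1]$ with $\mathcal{F}(x)=1$ iff $x=1$ and $\mathcal{F}(x)=0$ iff $x=0$. A t-superconorm is a commutative, associative map $S:[0,1]^2\to[0,1]$, increasing in each variable, with $S(x,y)\ge\max\{x,y\}$ for all $x,y$. *)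

(* Defs.v *)
From HB Require Import structures.
From mathcomp Require Import all_boot all_order all_algebra.
From mathcomp Require Import all_classical all_reals all_analysis.
Set Implicit Arguments. Unset Strict Implicit. Unset Printing Implicit Defensive.
Import Order.TTheory GRing.Theory Num.Theory.
Import numFieldNormedType.Exports.
Local Open Scope classical_set_scope.
Local Open Scope ring_scope.

Section Defs.
Variable R : realType.

Definition I01 : set R := `[0, 1]%classic.

Definition Ext0 : set (\bar R) := [set x | (0 <= x)%E].

(* grouping function on [0,1]^2 (values outside [0,1]^2 irrelevant) *)
Definition grouping (G : R -> R -> R) : Prop :=
  (forall x y, I01 x -> I01 y -> I01 (G x y)) /\
  [/\ (forall x y, I01 x -> I01 y -> G x y = G y x),
      (forall x y, I01 x -> I01 y -> (G x y = 0 <-> (x = 0 /\ y = 0))),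
      (forall x y, I01 x -> I01 y -> (G x y = 1 <-> (x = 1 \/ y = 1))),
      (forall x1 x2 y, I01 x1 -> I01 x2 -> I01 y -> x1 <= x2 ->
          G x1 y <= G x2 y /\ G y x1 <= G y x2) &
      {within I01 `*` I01, continuous (fun p : R * R => G p.1 p.2)}].

Definition pseudo_automorphism (F : R -> R) : Prop :=
  [/\ (forall x, I01 x -> I01 (F x)),
      {within I01, continuous F},
      (forall x y, I01 x -> I01 y -> x <= y -> F x <= F y),
      (forall x, I01 x -> (F x = 1 <-> x = 1)) &
      (forall x, I01 x -> (F x = 0 <-> x = 0))].

Definition t_superconorm (S : R -> R -> R) : Prop :=
  [/\ (forall x y, I01 x -> I01 y -> I01 (S x y)),
      (forall x y, I01 x -> I01 y -> S x y = S y x),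
      (forall x y z, I01 x -> I01 y -> I01 z -> S x (S y z) = S (S x y) z),
      (forall x1 x2 y, I01 x1 -> I01 x2 -> I01 y -> x1 <= x2 ->
          S x1 y <= S x2 y /\ S y x1 <= S y x2) &
      (forall x y, I01 x -> I01 y -> Num.max x y <= S x y)].

End Defs.
Arguments I01 {R}.
Arguments Ext0 {R}.

(* Main.v *)
Require Import Defs.
From HB Require Import structures.
From mathcomp Require Import all_boot all_order all_algebra.
From mathcomp Require Import all_classical all_reals all_analysis.
From mathcomp Require Import lra.
Import Order.TTheory GRing.Theory Num.Theory.
Import numFieldNormedType.Exports.
Local Open Scope classical_set_scope.
Local Open Scope ring_scope.

Lemma I01P (R : realType) (z : R) : I01 z <-> 0 <= z <= 1.
Proof. by rewrite /I01 /= in_itv. Qed.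

Lemma contract_cont (R : realType) : continuous (@contract R).
Proof.
move=> x; apply/cvg_ballP => e e0.
have := @nbhsx_ballx R (\bar R) x e e0.
by apply: filterS.
Qed.

Lemma ivt_g (R : realType) (t : R -> \bar R) : {within I01, continuous t} ->
  forall a b m, 0 <= a -> a <= b -> b <= 1 ->
  contract (t a) <= m <= contract (t b) ->
  exists2 c, a <= c <= b & contract (t c) = m.
Proof.
move=> tc a b m a0 ab b1 /andP[h1 h2].
have gc : {within `[a, b], continuous ((@contract R) \o t)}.
  apply: (@continuous_subspaceW _ _ _ I01).
    move=> z /=; rewrite !in_itv /= => /andP[z1 z2].
    by apply/I01P; rewrite (le_trans a0 z1) (le_trans z2 b1).
  by apply: within_continuous_comp => // z _; exact: contract_cont.
have [|c cin gcm] := @IVT R _ a b m ab gc.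
  by rewrite ge_min h1 le_max h2 orbT.
by exists c => //; move: cin; rewrite in_itv.
Qed.

Lemma key_min (R : realType) (p q c1 : \bar R) (c0 : R) :
  (c0%:E <= p)%E ->
  mine (p + mine q c1 - c0%:E)%E c1 = mine (p + q - c0%:E)%E c1.
Proof.
move=> hp.
have p0 : (0 <= p - c0%:E)%E by rewrite suber_ge0.
case: (leP q c1) => h; first by [].
rewrite min_r; last first.
  by rewrite addeAC; apply: leeDr.
apply/esym/min_idPr.
rewrite addeAC; apply: lee_paddl; [exact: p0| exact: ltW].
Qed.
Definition tset (R : realType) (t : R -> \bar R) (v : \bar R) : set R :=
  [set z | 0 <= z <= 1 /\ (t z <= v)%E].
Arguments tset {R}.
Definition tinv (R : realType) (t : R -> \bar R) (v : \bar R) : R :=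
  sup (tset t v).
Arguments tinv {R}.

Lemma tset0 (R : realType) (t : R -> \bar R) v : (t 0%R <= v)%E -> tset t v !=set0.
Proof. by move=> h; exists 0; split => //; rewrite lexx ler01. Qed.

Lemma tset_ub (R : realType) (t : R -> \bar R) v : ubound (tset t v) 1.
Proof. by move=> z [/andP[]]. Qed.

Lemma tinv_ge (R : realType) (t : R -> \bar R) v z :
  0 <= z <= 1 -> (t z <= v)%E -> z <= tinv t v.
Proof.
move=> hz hv; apply: ub_le_sup; last by split.
by exists 1; exact: tset_ub.
Qed.

Lemma tinv01 (R : realType) (t : R -> \bar R) v : (t 0%R <= v)%E ->
  0 <= tinv t v <= 1.
Proof.
move=> h; apply/andP; split.
  by apply: tinv_ge => //; rewrite lexx ler01.
by apply: ge_sup; [exact: tset0 | exact: tset_ub].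
Qed.

Lemma tinv_mono (R : realType) (t : R -> \bar R) v v' : (t 0%R <= v)%E ->
  (v <= v')%E -> tinv t v <= tinv t v'.
Proof.
move=> h vv; apply: ge_sup; first exact: tset0.
by move=> z [hz hzv]; apply: tinv_ge => //; exact: le_trans vv.
Qed.

Lemma tinvK (R : realType) (t : R -> \bar R) :
  {within I01, continuous t} ->
  (forall x y, I01 x -> I01 y -> x <= y -> (t x <= t y)%E) ->
  forall v, (t 0%R <= v)%E -> (v <= t 1%R)%E -> t (tinv t v) = v.
Proof.
move=> tc tm v h0 h1.
have /andP[c0 c1] := @tinv01 R t v h0.
set c := tinv t v.
case: (ltgtP (t c) v) => // h.
- have [|d /andP[cd d1] hd] := @ivt_g R t tc c 1 (contract v) c0 c1 (lexx 1) _.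
    by rewrite !le_contract (ltW h) h1.
  have tdv : t d = v by apply: contract_inj.
  have dc : d <= c by apply: tinv_ge; [rewrite (le_trans c0 cd) d1 | rewrite tdv].
  have dE : d = c by apply/le_anti; rewrite dc cd.
  by move: h; rewrite -dE tdv ltxx.
- have hlt : contract v < contract (t c) by rewrite lt_contract.
  pose m := (contract v + contract (t c)) / 2.
  have [|y /andP[y0 yc] hy] := @ivt_g R t tc 0 c m (lexx 0) c0 c1 _.
    apply/andP; split.
      apply: (@le_trans _ _ (contract v)); first by rewrite le_contract.
      by rewrite /m; move: hlt; move: (contract v) (contract (t c)) => a b; lra.
    by rewrite /m; move: hlt; move: (contract v) (contract (t c)) => a b; lra.
  have yltc : y < c.
    rewrite lt_neqAle yc andbT; apply/eqP => yE.
    have F1 : forall a b : R, a < b -> b <> (a + b)/2 by move=> a b; lra.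
    by move: hy; rewrite yE /m; apply: F1.
  have [z [/andP[z0 z1] tz] yz] := sup_gt (@tset0 R t v h0) yltc.
  have tyz : (t y <= t z)%E.
    apply: tm; [apply/I01P; rewrite y0 (le_trans yc c1) //
               |apply/I01P; rewrite z0 z1 // | exact: ltW].
  have : contract (t z) <= contract v by rewrite le_contract.
  have : contract (t y) <= contract (t z) by rewrite le_contract.
  have F2 : forall a b d : R, a < b -> (a + b) / 2 <= d -> d <= a -> False.
    by move=> a b d; lra.
  rewrite hy /m => h2 h3; exfalso; exact: F2 hlt h2 h3.
Qed.

Theorem proposition6p7 (R : realType) (a : R) (t : R -> \bar R) (s : \bar R -> R) :
  0 <= a ->
  (forall x, I01 x -> Ext0 (t x)) ->
  (forall x, Ext0 x -> I01 (s x)) ->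
  {within I01, continuous t} ->
  {within Ext0, continuous s} ->
  (forall x y, I01 x -> I01 y -> x <= y -> (t x <= t y)%E) ->
  (forall x y, Ext0 x -> Ext0 y -> (x <= y)%E -> s x <= s y) ->
  grouping (fun x y => s (t x + t y)%E) ->
  ((forall x, I01 x -> (t x = (a / 2)%:E <-> x = 0)) \/
   (forall x, Ext0 x -> (s x = 0 <-> (x <= a%:E)%E))) ->
  exists (F : R -> R) (Tsuper : R -> R -> R),
    pseudo_automorphism F /\ t_superconorm Tsuper /\
    forall x y, I01 x -> I01 y -> s (t x + t y)%E = F (Tsuper x y).
Proof.
move=> _ tE sI tc sc tm sm [Gin [Gc G0 G1 Gm Gcont]] _.
have I0 : I01 (0 : R) by apply/I01P; rewrite lexx ler01.
have I1 : I01 (1 : R) by apply/I01P; rewrite lexx ler01.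
have tge : forall x, I01 x -> (t 0%R <= t x)%E.
  by move=> x hx; apply: tm => //; move/I01P: hx => /andP[].
have tle : forall x, I01 x -> (t x <= t 1%R)%E.
  by move=> x hx; apply: tm => //; move/I01P: hx => /andP[].
have [r0 t0E] : exists r0, t 0%R = r0%:E.
  case E: (t 0%R) => [r| |]; first by exists r.
  - exfalso.
    have t1 : t 1%R = +oo%E by apply/eqP; rewrite -leye_eq -E; exact: tge.
    have h0 : s (t 0%R + t 0%R)%E = 0 by apply/G0.
    have h1 : s (t 1%R + t 1%R)%E = 1 by apply/G1 => //; left.
    by move: h0; rewrite E -t1 h1 => /eqP; rewrite oner_eq0.
  - by have := tE _ I0; rewrite /Ext0 /= E.
have r0t : forall x, I01 x -> (r0%:E <= t x)%E by move=> x hx; rewrite -t0E; exact: tge.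
have r0fin : (r0%:E : \bar R) \is a fin_num by rewrite fin_numE.
pose W x y := mine (t x + t y - r0%:E)%E (t 1%R).
have hW1 : forall x y, I01 x -> I01 y -> (t x <= W x y)%E.
  move=> x y hx hy; rewrite /W le_min tle // andbT.
  by rewrite -addeA; apply: leeDl; rewrite suber_ge0 // r0t.
have hW2 : forall x y, (W x y <= t 1%R)%E.
  by move=> x y; rewrite /W ge_min lexx orbT.
have hW0 : forall x y, I01 x -> I01 y -> (t 0%R <= W x y)%E.
  by move=> x y hx hy; apply: le_trans (tge _ hx) (hW1 _ _ hx hy).
have WC : forall x y, W x y = W y x by move=> x y; rewrite /W [(t x + t y)%E]addeC.
pose S x y := tinv t (W x y).
have tS : forall x y, I01 x -> I01 y -> t (S x y) = W x y.
  by move=> x y hx hy; exact: (@tinvK R t tc tm _ (hW0 _ _ hx hy) (hW2 x y)).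
have S01 : forall x y, I01 x -> I01 y -> I01 (S x y).
  by move=> x y hx hy; apply/I01P; apply: (@tinv01 R t); exact: hW0.
have Wmono : forall x1 x2 y, I01 x1 -> I01 x2 -> I01 y -> x1 <= x2 ->
    (W x1 y <= W x2 y)%E.
  move=> x1 x2 y h1 h2 hy le12; rewrite /W; apply: le_min2 => //.
  by apply: leeD2r; apply: leeD2r; exact: tm.
pose F z := s (t z + t 0%R)%E.
exists F, S; split; [|split].
- split.
  + by move=> x hx; apply: sI; apply: adde_ge0; apply: tE.
  + apply/subspace_continuousP => x hx.
    have hG := (proj1 (subspace_continuousP _ _) Gcont) (x, 0%R) (conj hx I0).
    apply: cvg_trans _ hG => P /= hP.
    have hp : (fun z : R => (z, 0%R)) @ x --> ((x, 0%R) : R * R).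
      exact: (@cvg_pair R R R (nbhs x) (nbhs x) (nbhs 0%R) _ _ _ (fun z => z) (fun _ => 0%R) cvg_id (cvg_cst _)).
    have hP' : nbhs (x, 0%R) (fun q : R * R => (I01 `*` I01) q -> P (s (t q.1 + t q.2)%E)) := hP.
    have h2 : nbhs x (fun z : R => (I01 `*` I01) (z, 0%R) -> P (s (t z + t 0%R)%E)) := hp _ hP'.
    change (nbhs x (fun z => I01 z -> P (F z))).
    by apply: filterS h2 => z hz Iz; apply: hz.
  + move=> x y hx hy xy; apply: sm; try by apply: adde_ge0; apply: tE.
    by apply: leeD2r; exact: tm.
  + move=> x hx; rewrite /F; split; first by case/(G1 _ _ hx I0) => // /eqP; rewrite eq_sym oner_eq0.
    by move=> ->; apply/G1 => //; left.
  + move=> x hx; rewrite /F; split; first by case/(G0 _ _ hx I0).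
    by move=> ->; apply/G0.
- split.
  + exact: S01.
  + by move=> x y hx hy; rewrite /S WC.
  + move=> x y z hx hy hz; rewrite /S; congr tinv.
    have e1 : t (tinv t (W y z)) = W y z := tS y z hy hz.
    have e2 : t (tinv t (W x y)) = W x y := tS x y hx hy.
    have -> : W x (tinv t (W y z)) = mine (t x + W y z - r0%:E)%E (t 1%R).
      transitivity (mine (t x + t (tinv t (W y z)) - r0%:E)%E (t 1%R)); first by [].
      by rewrite e1.
    have -> : W (tinv t (W x y)) z = mine (W x y + t z - r0%:E)%E (t 1%R).
      transitivity (mine (t (tinv t (W x y)) + t z - r0%:E)%E (t 1%R)); first by [].
      by rewrite e2.
    rewrite /W key_min; last exact: r0t.
    rewrite [(mine _ _ + t z)%E]addeC key_min; last exact: r0t.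
    congr (mine _ _); congr (_ + _)%E; rewrite !addeA; congr (_ + _)%E.
    by rewrite [LHS]addeC addeA.
  + move=> x1 x2 y h1 h2 hy le12; split.
      by apply: (@tinv_mono R t); [exact: hW0 | exact: Wmono].
    rewrite /S !(WC y).
    by apply: (@tinv_mono R t); [exact: hW0 | exact: Wmono].
  + move=> x y hx hy; rewrite ge_max; apply/andP; split.
      by apply: (@tinv_ge R t); [exact/I01P | exact: hW1].
    rewrite /S WC.
    by apply: (@tinv_ge R t); [exact/I01P | exact: hW1].
- move=> x y hx hy; rewrite /F tS // /W t0E.
  have G10 : s (t 1%R + r0%:E)%E = 1 by rewrite -t0E; apply/G1 => //; left.
  case: (leP (t x + t y - r0%:E)%E (t 1%R)) => h.
    by rewrite subeK.
  rewrite G10; apply/le_anti/andP; split.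
    by move/I01P: (Gin _ _ hx hy) => /andP[].
  rewrite -G10; apply: sm.
  - by rewrite /Ext0 /= -t0E; apply: adde_ge0; apply: tE.
  - by apply: adde_ge0; apply: tE.
  - rewrite -[(t x + t y)%E](subeK _ r0fin); apply: leeD2r; exact: ltW.
Qed.
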